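(* Let $0<m\le n$ and let $S\subset\Delta^n$ be the union of $m$ of the codimension-one faces of the $n$-simplex $\Delta^n$. Then the inclusion $S\hookrightarrow\Delta^n$ is an $m$-expansion.
   Context: $\Lambda^p_i=\bigcup_{j\ne i}\partial_j\Delta^p$ is the horn. For $m>0$, an inclusion of simplicial sets $S\hookrightarrow T$ is an $m$-expansion if there is a filtration $S=F_{-1}T\subset F_0T\subset F_1T\subset\cdots$ with $T=\bigcup_\ell F_\ell T$, a weakly monotone sequence $n_\ell\ge m$ ($\ell\ge0$), indices $0\le i_\ell\le n_\ell$, and maps $x_\ell:\Delta^{n_\ell}\to F_\ell T$, $y_\ell:\Lambda^{n_\ell}_{i_\ell}\to F_{\ell-1}T$ making $F_\ell T$ the pushout of $F_{\ell-1}T\leftarrow\Lambda^{n_\ell}_{i_\ell}\hookrightarrow\Delta^{n_\ell}$. *)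

(* Defs.v *)
(* simplicial sets defined from scratch as presheaves on the
   simplex category Delta, whose objects are [k] = {0,...,k} ('I_k.+1) and whose
   morphisms are weakly monotone maps. *)
From Stdlib Require Import ProofIrrelevance.
From mathcomp Require Import all_boot.

Set Implicit Arguments.
Unset Strict Implicit.
Unset Printing Implicit Defensive.

Definition monob k l (f : {ffun 'I_k.+1 -> 'I_l.+1}) : bool :=
  [forall i : 'I_k.+1, forall j : 'I_k.+1, (i <= j) ==> (f i <= f j)].

Definition Dmor (k l : nat) := {f : {ffun 'I_k.+1 -> 'I_l.+1} | monob f}.

Lemma monobP k l (f : {ffun 'I_k.+1 -> 'I_l.+1}) :
  monob f -> forall i j : 'I_k.+1, i <= j -> f i <= f j.
Proof.
move=> /forallP H i j hij; have /forallP Hi := H i.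
by have /implyP := Hi j; apply.
Qed.

Lemma Did_mono k : monob [ffun i : 'I_k.+1 => i].
Proof.
by apply/forallP => i; apply/forallP => j; apply/implyP; rewrite !ffunE.
Qed.

Definition Did k : Dmor k k := exist (@monob k k) _ (Did_mono k).

Lemma Dcomp_mono k l p (f : Dmor k l) (g : Dmor l p) :
  monob [ffun i => sval g (sval f i)].
Proof.
apply/forallP => i; apply/forallP => j; apply/implyP => hij; rewrite !ffunE.
by apply: (monobP (svalP g)); apply: (monobP (svalP f)).
Qed.

(* first f, then g *)
Definition Dcomp k l p (f : Dmor k l) (g : Dmor l p) : Dmor k p :=
  exist (@monob k p) _ (Dcomp_mono f g).

Lemma Dcomp_id_l k p (g : Dmor k p) : Dcomp (Did k) g = g.
Proof.
apply: val_inj; apply/ffunP => i; by rewrite /= !ffunE.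
Qed.

Lemma Dcomp_assoc k l p q (f : Dmor k l) (g : Dmor l p) (h : Dmor p q) :
  Dcomp (Dcomp f g) h = Dcomp f (Dcomp g h).
Proof.
apply: val_inj; apply/ffunP => i; by rewrite /= !ffunE.
Qed.

Record sSet := SSet {
  ob :> nat -> Type;
  act : forall k l, Dmor k l -> ob l -> ob k;
  act_id : forall k x, act (Did k) x = x;
  act_comp : forall k l p (f : Dmor k l) (g : Dmor l p) x,
      act (Dcomp f g) x = act f (act g x)
}.

Record sMap (X Y : sSet) := SMap {
  smap :> forall k, X k -> Y k;
  smap_nat : forall k l (f : Dmor k l) x, smap (act f x) = act f (smap x)
}.

Definition Delta (p : nat) : sSet :=
  @SSet (fun k => Dmor k p) (fun k l f g => Dcomp f g)
        (fun k g => Dcomp_id_l g) (fun k l q f g h => Dcomp_assoc f g h).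

Record subcx (X : sSet) := Subcx {
  smem :> forall k, X k -> Prop;
  smem_act : forall k l (f : Dmor k l) x, smem x -> smem (act f x)
}.

Section Sub.
Variables (X : sSet) (A : subcx X).

Definition sub_ob k := {x : X k | A k x}.
Definition sub_act k l (f : Dmor k l) (x : sub_ob l) : sub_ob k :=
  exist _ (act f (proj1_sig x)) (smem_act f (proj2_sig x)).

Lemma sub_act_id k (x : sub_ob k) : sub_act (Did k) x = x.
Proof. case: x => x px; apply: eq_sig_hprop => /=; [move=> ? ? ?; exact: proof_irrelevance|exact: act_id]. Qed.

Lemma sub_act_comp k l p (f : Dmor k l) (g : Dmor l p) x :
  sub_act (Dcomp f g) x = sub_act f (sub_act g x).
Proof. case: x => x px; apply: eq_sig_hprop => /=; [move=> ? ? ?; exact: proof_irrelevance|exact: act_comp]. Qed.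

Definition sub : sSet := SSet sub_act_id sub_act_comp.

Definition incl : sMap sub X := @SMap sub X (fun k x => proj1_sig x) (fun _ _ _ _ => erefl).
End Sub.

Definition incl_sub (X : sSet) (A B : subcx X) (H : forall k x, A k x -> B k x) :
  sMap (sub A) (sub B).
Proof.
refine (@SMap (sub A) (sub B) (fun k x => exist _ (proj1_sig x) (H k _ (proj2_sig x))) _).
move=> k l f [x px]; apply: eq_sig_hprop => //= ? ? ?; exact: proof_irrelevance.
Defined.

(* a k-simplex f of Delta^p lies in the face d_j Delta^p iff vertex j is not in its image *)
Definition in_face p (j : 'I_p.+1) k (f : Dmor k p) : Prop := forall v, sval f v != j.

Definition union_faces (p : nat) (J : pred 'I_p.+1) : subcx (Delta p).
Proof.
refine (@Subcx (Delta p) (fun k f => exists j, J j /\ in_face j f) _).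
move=> k l f g [j [Jj Hj]]; exists j; split => // v /=; rewrite ffunE; exact: Hj.
Defined.

Definition horn (p : nat) (i : 'I_p.+1) : subcx (Delta p) := union_faces (predC1 i).

(* The commutative square   A --g--> B
                            |h       |b
                            v        v
                            C --c--> D     is a pushout in sSet. *)
Definition is_pushout (A B C D : sSet) (g : sMap A B) (h : sMap A C)
    (b : sMap B D) (c : sMap C D) : Prop :=
  (forall k (a : A k), b k (g k a) = c k (h k a)) /\
  forall (Z : sSet) (u : sMap B Z) (v : sMap C Z),
    (forall k (a : A k), u k (g k a) = v k (h k a)) ->
    exists w : sMap D Z,
      ((forall k x, w k (b k x) = u k x) /\ (forall k x, w k (c k x) = v k x)) /\
      forall w' : sMap D Z,
        (forall k x, w' k (b k x) = u k x) -> (forall k x, w' k (c k x) = v k x) ->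
        forall k d, w' k d = w k d.

(* The filtration is indexed by l >= -1; we shift by one: F 0 = F_{-1} T = S and
   F l.+1 = F_l T.  The filtration is either finite (L = Some N: stages
   F_0,...,F_{N-1}, i.e. l < N) or infinite (L = None). *)
Definition in_range (L : option nat) (l : nat) : bool :=
  if L is Some N then l < N else true.
Definition in_range_cl (L : option nat) (l : nat) : bool :=
  if L is Some N then l <= N else true.

Definition expansion (m : nat) (T : sSet) (S : subcx T) : Prop :=
  exists (L : option nat) (F : nat -> subcx T) (n : nat -> nat)
         (i : forall l, 'I_(n l).+1),
    (forall k x, F 0 k x <-> S k x) /\
    (forall k (x : T k), exists l, in_range_cl L l /\ F l k x) /\
    (forall a b, in_range L a -> in_range L b -> a <= b -> n a <= n b) /\
    (forall l, in_range L l -> m <= n l) /\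
    (forall l, in_range L l ->
       exists (Hsub : forall k x, F l k x -> F l.+1 k x)
              (x : sMap (Delta (n l)) (sub (F l.+1)))
              (y : sMap (sub (horn (i l))) (sub (F l))),
         is_pushout y (incl (horn (i l))) (incl_sub Hsub) x).
Arguments expansion m T S : clear implicits.

(* Main.v *)
Require Import Defs.
From mathcomp Require Import all_boot.
From Stdlib Require Import Classical ClassicalEpsilon ProofIrrelevance.

Set Implicit Arguments.
Unset Strict Implicit.
Unset Printing Implicit Defensive.

Lemma sub_eq (X : sSet) (C : subcx X) k (a b : sub C k) :
  proj1_sig a = proj1_sig b -> a = b.
Proof.
move: a b; rewrite /= /sub_ob => -[a pa] [b pb] /= e; subst b.
by rewrite (proof_irrelevance _ pa pb).
Qed.

Section PO.
Variables (n p : nat) (sg : Dmor p n) (i : 'I_p.+1) (A B : subcx (Delta n)).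
Hypothesis sg_inj : forall k (g g' : Dmor k p), Dcomp g sg = Dcomp g' sg -> g = g'.
Hypothesis HAB : forall k x, A k x -> B k x.
Hypothesis HB : forall k f, B k f -> A k f \/ exists g, f = Dcomp g sg.
Hypothesis HBs : forall k g, B k (Dcomp g sg).
Hypothesis HA : forall k g, A k (Dcomp g sg) <-> horn i k g.

Definition xfun k (g : Delta p k) : sub B k := exist _ (Dcomp g sg) (@HBs k g).

Lemma xnat k l (f : Dmor k l) (g : Delta p l) : xfun (act f g) = act f (xfun g).
Proof. by apply: sub_eq; rewrite /= Dcomp_assoc. Qed.

Definition xmap : sMap (Delta p) (sub B) := @SMap (Delta p) (sub B) xfun xnat.

Definition yfun k (a : sub (horn i) k) : sub A k :=
  exist _ (Dcomp (proj1_sig a) sg) (proj2 (@HA k _) (proj2_sig a)).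

Lemma ynat k l (f : Dmor k l) (a : sub (horn i) l) : yfun (act f a) = act f (yfun a).
Proof. by apply: sub_eq; rewrite /= Dcomp_assoc. Qed.

Definition ymap : sMap (sub (horn i)) (sub A) := @SMap _ _ yfun ynat.

Section Univ.
Variables (Z : sSet) (u : sMap (sub A) Z) (v : sMap (Delta p) Z).
Hypothesis Huv : forall k (a : sub (horn i) k), u k (ymap k a) = v k (incl (horn i) k a).

Lemma notA_fact k (d : sub B k) : ~ A k (proj1_sig d) -> exists g, proj1_sig d = Dcomp g sg.
Proof. by move=> nA; case: (HB (proj2_sig d)). Qed.

Definition wfun k (d : sub B k) : Z k :=
  match excluded_middle_informative (A k (proj1_sig d)) with
  | left pa => u k (exist _ (proj1_sig d) pa)
  | right na => v k (proj1_sig (constructive_indefinite_description _ (notA_fact na)))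
  end.

Lemma wfunA k (d : sub B k) (pa : A k (proj1_sig d)) : wfun d = u k (exist _ (proj1_sig d) pa).
Proof.
rewrite /wfun; case: excluded_middle_informative => [pa'|//].
by rewrite (proof_irrelevance _ pa' pa).
Qed.

Lemma wfunN k (d : sub B k) g : ~ A k (proj1_sig d) -> proj1_sig d = Dcomp g sg -> wfun d = v k g.
Proof.
move=> nA e; rewrite /wfun; case: excluded_middle_informative => [//|na].
case: constructive_indefinite_description => g' /= e'.
by congr (v k _); apply: sg_inj; rewrite -e -e'.
Qed.

Lemma wfunH k g (pa : A k (Dcomp g sg)) : u k (exist _ (Dcomp g sg) pa) = v k g.
Proof.
have hh : horn i k g by apply/HA.
have := Huv (exist _ g hh) => /= <-.
by congr (u k _); apply: sub_eq.
Qed.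

Lemma wnat k l (f : Dmor k l) (d : sub B l) : wfun (act f d) = act f (wfun d).
Proof.
case: (classic (A l (proj1_sig d))) => [pa|na].
  have pa' : A k (proj1_sig (act f d)) := smem_act f pa.
  rewrite (wfunA pa') (wfunA pa) -smap_nat.
  by congr (u k _); apply: sub_eq.
have [g eg] := notA_fact na.
rewrite (wfunN na eg).
have e2 : proj1_sig (act f d) = Dcomp (Dcomp f g) sg by rewrite /= eg Dcomp_assoc.
case: (classic (A k (proj1_sig (act f d)))) => [pa|na2].
  rewrite (wfunA pa).
  have pa2 : A k (Dcomp (Dcomp f g) sg) by rewrite -e2.
  transitivity (u k (exist _ (Dcomp (Dcomp f g) sg) pa2)).
    by congr (u k _); apply: sub_eq.
  by rewrite wfunH -smap_nat.
by rewrite (wfunN na2 e2) -smap_nat.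
Qed.

Definition wmap : sMap (sub B) Z := @SMap _ _ wfun wnat.

Lemma univ : exists w : sMap (sub B) Z,
      ((forall k x, w k (incl_sub HAB k x) = u k x) /\
       (forall k x, w k (xmap k x) = v k x)) /\
      forall w' : sMap (sub B) Z,
        (forall k x, w' k (incl_sub HAB k x) = u k x) ->
        (forall k x, w' k (xmap k x) = v k x) ->
        forall k d, w' k d = w k d.
Proof.
exists wmap; split; [split|].
- move=> k x; rewrite /= (@wfunA k (incl_sub HAB k x) (proj2_sig x)).
  by congr (u k _); apply: sub_eq.
- move=> k g /=.
  case: (classic (A k (Dcomp g sg))) => [pa|na].
    by rewrite (@wfunA k (xfun g) pa) wfunH.
  by rewrite (@wfunN k (xfun g) g na).
- move=> w' hb hc k d /=.
  case: (classic (A k (proj1_sig d))) => [pa|na].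
    rewrite (wfunA pa) -hb; congr (w' k _); exact: sub_eq.
  have [g eg] := notA_fact na.
  rewrite (wfunN na eg) -hc; congr (w' k _); exact: sub_eq.
Qed.
End Univ.

Lemma po : is_pushout ymap (incl (horn i)) (incl_sub HAB) xmap.
Proof.
split; first by move=> k a; apply: sub_eq.
move=> Z u v Huv; exact: (univ Huv).
Qed.
End PO.

Lemma sorted_enum_set k (A : {set 'I_k}) : sorted (fun a b : 'I_k => a < b) (enum A).
Proof.
have : sorted (fun a b : 'I_k => a < b) (enum 'I_k).
  by have := iota_ltn_sorted 0 k; rewrite -val_enum_ord sorted_map.
rewrite /enum_mem (@eq_filter _ _ predT) // filter_predT => H.
apply: sorted_filter => //; move=> ? ? ?; exact: ltn_trans.
Qed.

Section Comb.
Variables (n : nat) (J : {set 'I_n.+1}) (k0 : 'I_n.+1).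

Definition Kp := [set x | (x \notin J) && (x != k0)].
Definition Ws := sort (fun A B : {set 'I_n.+1} => #|A| <= #|B|) (enum (powerset Kp)).
Definition W l := nth set0 Ws l.
Definition V l := k0 |: (J :|: W l).
Definition nn l := #|J| + #|W l|.

Definition sgf l : {ffun 'I_(nn l).+1 -> 'I_n.+1} := [ffun v : 'I_(nn l).+1 => nth k0 (enum (V l)) v].

Lemma Wsub l : W l \subset Kp.
Proof.
rewrite /W; case: (ltnP l (size Ws)) => hl; last by rewrite nth_default ?sub0set.
have : nth set0 Ws l \in Ws by apply: mem_nth.
by rewrite mem_sort mem_enum powersetE.
Qed.

Lemma Wall (X : {set 'I_n.+1}) : X \subset Kp -> exists l, l < size Ws /\ W l = X.
Proof.
move=> hX; have hm : X \in Ws by rewrite mem_sort mem_enum powersetE.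
by exists (index X Ws); rewrite index_mem /W nth_index.
Qed.

Lemma Wcard a b : a <= b -> b < size Ws -> #|W a| <= #|W b|.
Proof.
move=> hab hb.
have hs : sorted (fun A B : {set 'I_n.+1} => #|A| <= #|B|) Ws.
  by rewrite /Ws; apply: sort_sorted => ? ?; exact: leq_total.
have tr : transitive (fun A B : {set 'I_n.+1} => #|A| <= #|B|).
  by move=> ? ? ?; exact: leq_trans.
have rf : reflexive (fun A B : {set 'I_n.+1} => #|A| <= #|B|) by move=> ?.
by apply: (sorted_leq_nth tr rf set0 hs); rewrite ?inE ?(leq_ltn_trans hab).
Qed.

Lemma Wuniq a b : a < size Ws -> b < size Ws -> W a = W b -> a = b.
Proof.
move=> ha hb e; apply/eqP; rewrite -(nth_uniq set0 ha hb); first exact/eqP.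
by rewrite /Ws sort_uniq enum_uniq.
Qed.

Hypothesis k0J : k0 \notin J.

Lemma cardV l : #|V l| = (nn l).+1.
Proof.
have hW := Wsub l.
rewrite /V cardsU1 cardsU.
have -> : J :&: W l = set0.
  apply/setP => x; rewrite !inE; apply/negP => /andP[xJ xW].
  by have := subsetP hW x xW; rewrite inE xJ.
rewrite cards0 subn0 /nn.
have -> : k0 \notin J :|: W l.
  rewrite !inE negb_or k0J /=; apply/negP => kW.
  by have := subsetP hW k0 kW; rewrite inE eqxx andbF.
by [].
Qed.

Lemma size_enumV l : size (enum (V l)) = (nn l).+1.
Proof. by rewrite -cardE cardV. Qed.

Lemma sgf_strict l (a b : 'I_(nn l).+1) : a < b -> sgf l a < sgf l b.
Proof.
move=> hab; rewrite !ffunE.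
have tr : transitive (fun a b : 'I_n.+1 => a < b).
  by move=> ? ? ?; exact: ltn_trans.
apply: (sorted_ltn_nth tr k0 (sorted_enum_set (V l))) => //; by rewrite inE size_enumV.
Qed.

Lemma sgf_inj l (a b : 'I_(nn l).+1) : sgf l a = sgf l b -> a = b.
Proof.
move=> e; case: (ltngtP a b) => h.
- by have := sgf_strict h; rewrite e ltnn.
- by have := sgf_strict h; rewrite e ltnn.
- exact: val_inj.
Qed.

Lemma sgf_mono l : monob (sgf l).
Proof.
apply/forallP => a; apply/forallP => b; apply/implyP => hab.
rewrite leq_eqVlt in hab; case/orP: hab => [/eqP/val_inj -> //|h].
exact: ltnW (sgf_strict h).
Qed.

Definition sgm l : Dmor (nn l) n := exist _ (sgf l) (sgf_mono l).

Lemma sgf_in l v : sgf l v \in V l.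
Proof. by rewrite ffunE -mem_enum mem_nth // size_enumV. Qed.

Lemma sgf_surj l x : x \in V l -> exists v, sgf l v = x.
Proof.
move=> hx; have hx' : x \in enum (V l) by rewrite mem_enum.
have hi : index x (enum (V l)) < (nn l).+1 by rewrite -size_enumV index_mem.
exists (Ordinal hi); by rewrite ffunE /= nth_index.
Qed.

Definition ih l : 'I_(nn l).+1 := inord (index k0 (enum (V l))).

Lemma sgf_ih l : sgf l (ih l) = k0.
Proof.
have hx' : k0 \in enum (V l) by rewrite mem_enum !inE eqxx.
by rewrite ffunE inordK ?nth_index // -size_enumV index_mem.
Qed.

Lemma sgm_inj l k (g g' : Dmor k (nn l)) : Dcomp g (sgm l) = Dcomp g' (sgm l) -> g = g'.
Proof.
move=> e; apply: val_inj; apply/ffunP => v.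
apply: sgf_inj.
have := congr1 (fun h : Dmor k n => sval h v) e; rewrite /= !ffunE => E.
by rewrite ?ffunE E.
Qed.

Lemma factor l k (f : Dmor k n) : (forall v, sval f v \in V l) ->
  exists g, f = Dcomp g (sgm l).
Proof.
move=> hf.
have hg : forall v, {w | sgf l w = sval f v}.
  move=> v; apply: constructive_indefinite_description; exact: sgf_surj.
pose g := [ffun v => sval (hg v)].
have gE v : sgf l (g v) = sval f v.
  by rewrite /g [X in sgf l X]ffunE; exact: (proj2_sig (hg v)).
have gm : monob g.
  apply/forallP => a; apply/forallP => b; apply/implyP => hab.
  rewrite leqNgt; apply/negP => h.
  have := sgf_strict h; rewrite !gE ltnNge.
  by rewrite (monobP (svalP f) hab).
exists (exist _ g gm); apply: val_inj; apply/ffunP => v.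
by rewrite /= ffunE gE.
Qed.

Definition Fp l k (f : Dmor k n) : Prop :=
  union_faces (fun j => j \in J) k f \/ exists l', l' < l /\ forall v, sval f v \in V l'.

Lemma Fp_act l k k' (f : Dmor k k') (g : Dmor k' n) : Fp l g -> Fp l (Dcomp f g).
Proof.
case=> [h|[l' [hl hv]]].
  by left; exact: (smem_act (X := Delta n) f h).
by right; exists l'; split => // v; rewrite /= ffunE.
Qed.

Definition Fs l : subcx (Delta n) := @Subcx (Delta n) (Fp l) (fun k k' f g h => Fp_act f h).


Lemma HBl l k (f : Dmor k n) : Fp l.+1 f -> Fp l f \/ exists g, f = Dcomp g (sgm l).
Proof.
case=> [h|[l' [hl hv]]]; first by left; left.
rewrite ltnS leq_eqVlt in hl; case/orP: hl => [/eqP e|hl].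
  by right; apply: factor; rewrite -e.
by left; right; exists l'.
Qed.

Lemma HBsl l k (g : Dmor k (nn l)) : Fp l.+1 (Dcomp g (sgm l)).
Proof. by right; exists l; split => // v; rewrite /= ffunE; exact: sgf_in. Qed.

Lemma HABl l k (f : Dmor k n) : Fp l f -> Fp l.+1 f.
Proof.
case=> [h|[l' [hl hv]]]; first by left.
by right; exists l'; split => //; rewrite ltnS ltnW.
Qed.

Lemma total_F k (f : Dmor k n) : exists l, l < size Ws /\ forall v, sval f v \in V l.
Proof.
have hX : [set x in Kp | [exists v, sval f v == x]] \subset Kp.
  by apply/subsetP => x; rewrite inE => /andP[].
have [l [hl eW]] := Wall hX.
exists l; split => // v; rewrite /V eW /Kp !inE.
case: eqP => //= _; case: (sval f v \in J) => //=.
by apply/existsP; exists v.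
Qed.

Lemma HAl l : l < size Ws -> forall k (g : Dmor k (nn l)),
  Fp l (Dcomp g (sgm l)) <-> horn (ih l) k g.
Proof.
move=> hl k g; split.
- case=> [[j0 [j0J hj0]] | [l' [hl' hv]]].
  + have j0V : j0 \in V l by rewrite !inE j0J orbT.
    have [j ej] := sgf_surj j0V.
    exists j; split.
      apply/eqP => eji; move: j0J; by rewrite -ej eji sgf_ih (negbTE k0J).
    move=> v; apply/negP => /eqP gv.
    by have := hj0 v; rewrite /= ffunE gv ej eqxx.
  + have hl'N : l' < size Ws := ltn_trans hl' hl.
    have : ~~ (W l \subset W l').
      apply/negP => sb; have c := Wcard (ltnW hl') hl.
      have : W l == W l' by rewrite eqEcard sb c.
      by move/eqP/(Wuniq hl hl'N) => e; rewrite e ltnn in hl'.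
    case/subsetPn => w wl wl'.
    have := subsetP (Wsub l) w wl; rewrite inE => /andP[wJ wk0].
    have wV : w \in V l by rewrite !inE wl !orbT.
    have [j ej] := sgf_surj wV.
    exists j; split.
      by apply/eqP => eji; move: wk0; rewrite -ej eji sgf_ih eqxx.
    move=> v; apply/negP => /eqP gv.
    have := hv v; rewrite /= ffunE gv ej !inE (negbTE wk0) (negbTE wJ) (negbTE wl').
    by [].
- case=> j [/= hji hj].
  have wk0 : sgf l j != k0.
    rewrite -(sgf_ih l); apply/negP => /eqP /sgf_inj e.
    by rewrite e eqxx in hji.
  have nv v : sgf l (sval g v) != sgf l j.
    apply/negP => /eqP /sgf_inj e.
    by have := hj v; rewrite e eqxx.
  case: (boolP (sgf l j \in J)) => wJ.
    by left; exists (sgf l j); split => // v; rewrite /= ffunE; exact: nv v.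
  have wl : sgf l j \in W l.
    by have := sgf_in j; rewrite !inE (negbTE wk0) (negbTE wJ).
  have hX : W l :\ sgf l j \subset Kp.
    apply: subset_trans (Wsub l); exact: subD1set.
  have [l' [hl'N eW]] := Wall hX.
  right; exists l'; split.
    rewrite ltnNge; apply/negP => hle; have := Wcard hle hl'N.
    by rewrite eW (cardsD1 (sgf l j) (W l)) wl add1n ltnn.
  move=> v; rewrite /= ffunE /V eW.
  by have := sgf_in (sval g v); rewrite !inE (nv v).
Qed.

End Comb.


Theorem lemma3p8 (m n : nat) (J : {set 'I_n.+1}) :
  0 < m -> m <= n -> #|J| = m ->
  expansion m (Delta n) (union_faces (fun j => j \in J)).
Proof.
move=> _ lemn cJ.
have : 0 < #|~: J|.
  have h := cardsC J; rewrite card_ord cJ in h.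
  rewrite lt0n; apply/eqP => e; rewrite e addn0 in h.
  by move: lemn; rewrite h ltnn.
case/card_gt0P => k0; rewrite inE => k0J.
exists (Some (size (Ws J k0))), (Fs J k0), (nn J k0), (ih J k0).
split; [|split; [|split; [|split]]].
- move=> k x; split; last by left.
  by case=> [//|[l' []]].
- move=> k x; have [l [hl hv]] := total_F J k0 x.
  exists (size (Ws J k0)); split => //=; by right; exists l; split.
- move=> a b /= ha hb hab; rewrite /nn leq_add2l; exact: Wcard.
- by move=> l _; rewrite /nn cJ leq_addr.
- move=> l /= hl.
  exists (fun k x (h : Fs J k0 l k x) => HABl h).
  do 2 eexists; apply: po.
  + exact: sgm_inj.
  + exact: HBl.
  + exact: HBsl.
  + exact: HAl.
Qed.
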